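(* Let $X$ be a connected quandle of type $t<\infty$. Then for all $x,y\in X$, $e_x^{t}=e_y^{t}$ in $\mathrm{As}(X)$, and this element lies in the center of $\mathrm{As}(X)$.
   Context: A quandle is a set $X$ with a binary operation $\lhd$ such that $a\lhd a=a$ for all $a$, each map $x\mapsto x\lhd a$ is a bijection of $X$, and $(a\lhd b)\lhd c=(a\lhd c)\lhd(b\lhd c)$ for all $a,b,c$. The adjoint group $\mathrm{As}(X)$ is the group with generators $e_x$ ($x\in X$) and relations $e_{x\lhd y}=e_y^{-1}e_xe_y$. It acts on $X$ from the right by $x\cdot e_y=x\lhd y$; $X$ is connected if this action is transitive. $x\lhd^N y$ denotes the $N$-fold application of $\bullet\lhd y$ to $x$; $X$ is of type $t$ if $t$ is the smallest positive integer $N$ with $x\lhd^N y=x$ for all $x,y\in X$. *)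

(* Defs.v *)
From mathcomp Require Import all_boot.
Set Implicit Arguments. Unset Strict Implicit. Unset Printing Implicit Defensive.

Definition quandle (X : Type) (op : X -> X -> X) : Prop :=
  [/\ forall a, op a a = a,
      forall a, bijective (fun x => op x a)
    & forall a b c, op (op a b) c = op (op a c) (op b c)].

(* Words in the generators of As(X): (x, true) stands for e_x and
   (x, false) for e_x^{-1}; a word is read left to right as a product. *)
Definition word (X : Type) := seq (X * bool).

(* The congruence on words defining the adjoint group
   As(X) = < e_x (x in X) | e_{x ◁ y} = e_y^{-1} e_x e_y >:
   the smallest equivalence relation, compatible with concatenation,
   containing free cancellation and the defining relations.
   Multiplication in As(X) is concatenation, the identity is [::]. *)
Inductive as_eq (X : Type) (op : X -> X -> X) : word X -> word X -> Prop :=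
  | as_refl u : as_eq op u u
  | as_sym u v : as_eq op u v -> as_eq op v u
  | as_trans u v w : as_eq op u v -> as_eq op v w -> as_eq op u w
  | as_cong a b u v : as_eq op u v -> as_eq op (a ++ u ++ b) (a ++ v ++ b)
  | as_cancel x s : as_eq op [:: (x, s); (x, ~~ s)] [::]
  | as_rel x y : as_eq op [:: (op x y, true)] [:: (y, false); (x, true); (y, true)].

(* The right action of As(X) on X, as a relation: [act_rel op w x z] means
   x . w = z, where x . e_y = x ◁ y and x . e_y^{-1} is the unique m with
   m ◁ y = x. *)
Fixpoint act_rel (X : Type) (op : X -> X -> X) (w : word X) (x z : X) : Prop :=
  match w with
  | [::] => x = z
  | (y, s) :: w' =>
      exists m, (if s then m = op x y else op m y = x) /\ act_rel op w' m z
  end.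

Definition connected (X : Type) (op : X -> X -> X) : Prop :=
  forall x z : X, exists w : word X, act_rel op w x z.

Definition qpow (X : Type) (op : X -> X -> X) (N : nat) (x y : X) : X :=
  iter N (fun u => op u y) x.

Definition quandle_type (X : Type) (op : X -> X -> X) (t : nat) : Prop :=
  [/\ 0 < t,
      forall x y, qpow op t x y = x
    & forall N, 0 < N -> N < t -> ~ (forall x y, qpow op N x y = x)].

(* Main.v *)
Require Import Defs.
From mathcomp Require Import all_boot.
Set Implicit Arguments.

Section S.
Variables (X : Type) (op : X -> X -> X).
Local Notation E := (as_eq op).

Lemma Etr u v w : E u v -> E v w -> E u w.
Proof. exact: as_trans. Qed.

Lemma Ecat u u' v v' : E u u' -> E v v' -> E (u ++ v) (u' ++ v').
Proof.
move=> H1 H2; apply: (Etr (v := u' ++ v)).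
  by have := as_cong [::] v H1; rewrite !cat0s.
by have := as_cong u' [::] H2; rewrite !cats0.
Qed.

Lemma Ecan x s : E [:: (x, s); (x, ~~ s)] [::].
Proof. exact: as_cancel. Qed.

Lemma B x y : E [:: (y, true); (op x y, true)] [:: (x, true); (y, true)].
Proof.
apply: (Etr (v := [:: (y, true)] ++ [:: (y, false); (x, true); (y, true)])).
  exact: (@Ecat [:: (y, true)] _ [:: (op x y, true)] _ (as_refl _ _) (as_rel op x y)).
apply: (Etr (v := [::] ++ [:: (x, true); (y, true)])).
  exact: (@Ecat [:: (y, true); (y, false)] [::] [:: (x, true); (y, true)] _ (Ecan y true) (as_refl _ _)).
exact: as_refl.
Qed.

Lemma L1 n x z :
  E ((z, true) :: nseq n (x, true)) (nseq n (x, true) ++ [:: (qpow op n z x, true)]).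
Proof.
elim: n z => [|n IH] z /=; first exact: as_refl.
apply: (Etr (v := [:: (x, true); (op z x, true)] ++ nseq n (x, true))).
  exact: (@Ecat [:: (z, true); (x, true)] _ _ _ (as_sym (B z x)) (as_refl _ _)).
have -> : op (qpow op n z x) x = qpow op n (op z x) x.
  by rewrite /qpow -(iterS n (fun u => op u x)) iterSr.
exact: (@Ecat [:: (x, true)] _ _ _ (as_refl _ _) (IH (op z x))).
Qed.

Lemma L2 n x y :
  E ((y, true) :: nseq n (op x y, true)) (nseq n (x, true) ++ [:: (y, true)]).
Proof.
elim: n => [|n IH] /=; first exact: as_refl.
apply: (Etr (v := [:: (x, true); (y, true)] ++ nseq n (op x y, true))).
  exact: (@Ecat [:: (y, true); (op x y, true)] _ _ _ (B x y) (as_refl _ _)).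
exact: (@Ecat [:: (x, true)] _ _ _ (as_refl _ _) IH).
Qed.

Lemma cancel_left a u v : E (a :: u) (a :: v) -> E u v.
Proof.
case: a => y s H.
have H1 := Ecat (as_refl op [:: (y, ~~ s)]) H.
have K : forall w, E w ([:: (y, ~~ s)] ++ (y, s) :: w).
  move=> w; apply: as_sym.
  apply: (Etr (v := [::] ++ w)); last exact: as_refl.
  apply: (Ecat (u := [:: (y, ~~ s); (y, s)])); last exact: as_refl.
  by have := Ecan y (~~ s); rewrite negbK.
exact: Etr (K u) (Etr H1 (as_sym (K v))).
Qed.

Lemma nseq_cat_r n (a : X * bool) : nseq n a ++ [:: a] = a :: nseq n a.
Proof. by elim: n => //= n ->. Qed.

End S.

Theorem lemma3p5 (X : Type) (op : X -> X -> X) (t : nat) :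
  quandle op -> connected op -> quandle_type op t ->
  (forall x y : X, as_eq op (nseq t (x, true)) (nseq t (y, true))) /\
  (forall (x : X) (w : word X),
      as_eq op (nseq t (x, true) ++ w) (w ++ nseq t (x, true))).
Proof.
move=> [_ _ _] Hc [_ Ht _].
have Gp : forall x z, as_eq op ((z, true) :: nseq t (x, true))
                               (nseq t (x, true) ++ [:: (z, true)]).
  by move=> x z; have := L1 op t x z; rewrite Ht.
have G : forall x a, as_eq op (a :: nseq t (x, true)) (nseq t (x, true) ++ [:: a]).
  move=> x [z [|]]; first exact: Gp.
  apply: (cancel_left (a := (z, true))).
  set xt := nseq t (x, true).
  apply: (as_trans (v := xt)).
    exact: (@Ecat _ op [:: (z, true); (z, false)] [::] xt xt (as_cancel op z true) (as_refl _ _)).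
  apply: as_sym.
  change (as_eq op (((z, true) :: xt) ++ [:: (z, false)]) xt).
  apply: (as_trans (v := (xt ++ [:: (z, true)]) ++ [:: (z, false)])).
    exact: (Ecat (Gp x z) (as_refl _ _)).
  rewrite -catA.
  have := (@Ecat _ op xt xt [:: (z, true); (z, false)] [::] (as_refl _ _) (as_cancel op z true)).
  by rewrite cats0.
have Cen : forall x w, as_eq op (nseq t (x, true) ++ w) (w ++ nseq t (x, true)).
  move=> x; elim=> [|a w IH]; first by rewrite cats0; apply: as_refl.
  have -> : nseq t (x, true) ++ a :: w = (nseq t (x, true) ++ [:: a]) ++ w by rewrite -catA.
  apply: (as_trans (v := (a :: nseq t (x, true)) ++ w)).
    exact: (Ecat (as_sym (G x a)) (as_refl _ _)).
  exact: (@Ecat _ op [:: a] [:: a] _ _ (as_refl _ _) IH).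
have Step : forall x y, as_eq op (nseq t (op x y, true)) (nseq t (x, true)).
  move=> x y; apply: (cancel_left (a := (y, true))).
  apply: as_trans (L2 op t x y) _.
  exact: (Cen x [:: (y, true)]).
split=> //.
move=> x z; have [w Hw] := Hc x z.
elim: w x Hw => [|[y s] w IH] x /=; first by move=> ->; apply: as_refl.
case=> m [Hm Hw]; apply: as_trans (IH m Hw).
case: s Hm => Hm.
  by rewrite Hm; apply: as_sym; apply: Step.
by rewrite -Hm; apply: Step.
Qed.
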